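(* Let $\lambda$ be a partition and let $T\xrightarrow{I}T'$ be an edge of the crystal skeleton $\mathsf{CS}(\lambda)$ with label the Dyck pattern interval $I$. Then there is an edge between $T$ and $T'$ in the dual equivalence graph $\mathsf{DE}(\lambda)$ if and only if $|I|=3$.
   Context: French notation; $|\lambda|=N$; $\mathsf{SYT}(\lambda)$ standard tableaux; reading word $\mathsf{row}(T)$ reads rows left to right from top row to bottom row. Standardization $\mathsf{std}$ of a semistandard tableau replaces the $a_j$ entries $j$, in reading order, by $a_1+\dots+a_{j-1}+1,\dots,a_1+\dots+a_j$. Crystal operator $f_i$ on semistandard tableaux: in the subword of $\mathsf{row}(b)$ of letters $i,i+1$, bracket each $i+1$ with an unbracketed $i$ to its right (parenthesis matching); $f_i$ changes the rightmost unbracketed $i$ to $i+1$. For a permutation $\pi$ of $[N]$ and $I=[i,i+2m]\subseteq[N]$, $m\ge1$, $I$ is a Dyck pattern interval of $\pi$ if the RSK insertion tableau of the subword $\pi|_I$ of letters in $I$ has bottom row $i,\dots,i+m$ and top row $i+m+1,\dots,i+2m$; a Dyck pattern interval of $T$ is one of $\mathsf{row}(T)$. The (labeled) crystal skeleton $\mathsf{CS}(\lambda)$ is the directed graph on $\mathsf{SYT}(\lambda)$ with, for each $T$ and each Dyck pattern interval $I=[i,i+2m]$ of $T$, an edge $T\xrightarrow{I}T'$ where $T'=\mathsf{std}(f_i(b))$ and $b$ is obtained from $T$ by replacing entries $i,\dots,i+m$ by $i$ and $i+m+1,\dots,i+2m$ by $i+1$. (Equivalently it is obtained from the crystal $B(\lambda)_n$,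 $n\ge N$, by contracting each quasi-crystal $\{b:\mathsf{std}(b)=T\}$ to a vertex.) The dual equivalence graph $\mathsf{DE}(\lambda)$ has vertex set $\mathsf{SYT}(\lambda)$ and an edge $T$—$D_i(T)$ for $1<i<N$, where on reading words $D_i$ acts by $\ldots i\ldots i{+}1\ldots i{-}1\ldots \leftrightarrow \ldots i{-}1\ldots i{+}1\ldots i\ldots$ and $\ldots i\ldots i{-}1\ldots i{+}1\ldots\leftrightarrow\ldots i{+}1\ldots i{-}1\ldots i\ldots$ (only the letters $i-1,i,i+1$ change), and is undefined otherwise. *)

(* Defs.v *)
From mathcomp Require Import all_boot.
Set Implicit Arguments. Unset Strict Implicit. Unset Printing Implicit Defensive.

(* Tableaux in French notation: a tableau is a list of rows, row 0 being the
   BOTTOM (longest) row; entries increase along rows (left to right) and up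
   columns. *)
Definition tableau := seq (seq nat).

Definition is_partition (la : seq nat) : bool :=
  sorted geq la && all (fun p => 0 < p) la.

Definition row_word (T : tableau) : seq nat := flatten (rev T).

Definition tab_of_word (sh : seq nat) (w : seq nat) : tableau :=
  rev (reshape (rev sh) w).

Definition is_SYT (la : seq nat) (T : tableau) : bool :=
  [&& map size T == la,
      all (sorted ltn) T,
      all (fun r => all (fun c => nth 0 (nth [::] T r) c < nth 0 (nth [::] T r.+1) c)
                        (iota 0 (size (nth [::] T r.+1))))
          (iota 0 (size T))
    & perm_eq (row_word T) (iota 1 (sumn la))].

Fixpoint rs_insert (t : tableau) (x : nat) : tableau :=
  match t with
  | [::] => [:: [:: x]]
  | r :: t' =>
      if has (fun y => x < y) r then
        let k := find (fun y => x < y) r in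
        set_nth 0 r k x :: rs_insert t' (nth 0 r k)
      else rcons r x :: t'
  end.

Definition RS (w : seq nat) : tableau := foldl rs_insert [::] w.

Definition dyck_interval (N : nat) (w : seq nat) (i m : nat) : bool :=
  [&& 0 < m, 0 < i, i + 2 * m <= N &
      RS [seq x <- w | i <= x <= i + 2 * m] == [:: iota i m.+1; iota (i + m + 1) m]].

(* position of the rightmost unbracketed letter i (each i+1 is bracketed
   with an unbracketed i to its right) *)
Fixpoint unbr_pos (i : nat) (w : seq nat) (open pos : nat) (acc : option nat)
  : option nat :=
  match w with
  | [::] => acc
  | x :: w' =>
      if x == i.+1 then unbr_pos i w' open.+1 pos.+1 acc
      else if x == i then
        (if 0 < open then unbr_pos i w' open.-1 pos.+1 acc
         else unbr_pos i w' open pos.+1 (Some pos))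
      else unbr_pos i w' open pos.+1 acc
  end.

Definition f_word (i : nat) (w : seq nat) : option (seq nat) :=
  match unbr_pos i w 0 0 None with
  | Some p => Some (set_nth 0 w p i.+1)
  | None => None
  end.

Definition f_tab (i : nat) (b : tableau) : option tableau :=
  match f_word i (row_word b) with
  | Some w => Some (tab_of_word (map size b) w)
  | None => None
  end.

Definition std_word (w : seq nat) : seq nat :=
  [seq (count (fun y => y < nth 0 w k) w
        + count (pred1 (nth 0 w k)) (take k w)).+1 | k <- iota 0 (size w)].

Definition std (b : tableau) : tableau := tab_of_word (map size b) (std_word (row_word b)).

Definition collapse (i m : nat) (T : tableau) : tableau :=
  map (map (fun x => if i <= x <= i + m then i
                     else if i + m < x <= i + 2 * m then i.+1 else x)) T.

Definition CS_edge (la : seq nat) (T : tableau) (i m : nat) (T' : tableau) : Prop :=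
  [/\ is_SYT la T, is_SYT la T', dyck_interval (sumn la) (row_word T) i m
    & exists b', f_tab i (collapse i m T) = Some b' /\ T' = std b'].

Definition swap_letters (a b : nat) (w : seq nat) : seq nat :=
  map (fun x => if x == a then b else if x == b then a else x) w.

Definition D_word (i : nat) (w : seq nat) : option (seq nat) :=
  let a := index i.-1 w in let b := index i w in let c := index i.+1 w in
  if ((b < c < a) || (a < c < b)) then Some (swap_letters i.-1 i w)
  else if ((b < a < c) || (c < a < b)) then Some (swap_letters i i.+1 w)
  else None.

Definition DE_edge (la : seq nat) (T T' : tableau) : Prop :=
  [/\ is_SYT la T, is_SYT la T'
    & exists i, [/\ 1 < i, i < sumn la & D_word i (row_word T) = Some (row_word T')]].

Definition DE_adjacent (la : seq nat) (T T' : tableau) : Prop :=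
  DE_edge la T T' \/ DE_edge la T' T.

(* Main.v *)
Require Import Defs.
From mathcomp Require Import all_boot zify.
Set Implicit Arguments. Unset Strict Implicit. Unset Printing Implicit Defensive.

Lemma count_take_drop (T : Type) (P : pred T) n s :
  count P (take n s) + count P (drop n s) = count P s.
Proof. by rewrite -count_cat cat_take_drop. Qed.

Lemma count_take_le (T : Type) (P : pred T) a b s : a <= b ->
  count P (take a s) <= count P (take b s).
Proof.
move=> ab; rewrite -(take_takel s ab) -[X in _ <= X](count_take_drop P a (take b s)).
exact: leq_addr.
Qed.

Lemma count_take_lt (T : Type) (x0 : T) (P : pred T) a b s : a < b -> a < size s ->
  P (nth x0 s a) -> count P (take a s) < count P (take b s).
Proof.
move=> ab aS Pa; apply: (leq_trans _ (count_take_le P s ab)).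
by rewrite (take_nth x0 aS) -cats1 count_cat /= Pa; lia.
Qed.

Lemma index_filter (T : eqType) (P : pred T) (s : seq T) x : x \in s -> P x ->
  index x (filter P s) = count P (take (index x s) s).
Proof.
elim: s => [|y s IH] //=; rewrite inE => Hx Px.
case: (eqVneq y x) => [->|nyx] /=; first by rewrite Px /= eqxx.
move: Hx; rewrite eq_sym (negbTE nyx) /= => Hx.
case Py: (P y) => /=; last by rewrite IH.
by rewrite (negbTE nyx) IH.
Qed.

Lemma filter_drop (T : Type) (P : pred T) n s :
  filter P (drop n s) = drop (count P (take n s)) (filter P s).
Proof.
by rewrite -{3}(cat_take_drop n s) filter_cat drop_size_cat // size_filter.
Qed.

Lemma mem_take_index (T : eqType) (s : seq T) n x : x \in s ->
  (x \in take n s) = (index x s < n).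
Proof.
move=> xs; rewrite -{2}(cat_take_drop n s) index_cat.
case: ifP => xt.
  have := index_mem x (take n s); rewrite xt size_take_min => h; apply/esym; lia.
case: (ltnP n (size s)) => ns.
  by rewrite size_takel ?(ltnW ns) // ltnNge leq_addr.
by move: xt; rewrite take_oversize // xs.
Qed.

Lemma mem_drop_index (T : eqType) (s : seq T) n x : uniq s -> x \in s ->
  (x \in drop n s) = (n <= index x s).
Proof.
move=> us xs; have e : s = take n s ++ drop n s by rewrite cat_take_drop.
have := us; rewrite {1}e cat_uniq => /and3P[_ dis _].
have := xs; rewrite {1}e mem_cat leqNgt -mem_take_index //.
case xt: (x \in take n s) => //= _.
by apply/negP => xd; case/hasP: dis; exists x.
Qed.

Lemma count_take_index (T : eqType) (P : pred T) (s : seq T) n : uniq s ->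
  count P (take n s) = count (fun y => P y && (index y s < n)) s.
Proof.
move=> us; rewrite -{3}(cat_take_drop n s) count_cat.
rewrite [X in _ = _ + X](eq_in_count (a2 := pred0)); last first.
  move=> y yd; have ys : y \in s by rewrite (mem_drop yd).
  by move: yd; rewrite mem_drop_index // leqNgt => /negbTE ->; rewrite andbF.
rewrite count_pred0 addn0; apply: eq_in_count => y yt.
by rewrite -mem_take_index ?yt ?andbT // (mem_take yt).
Qed.

Lemma set_nth_mem (s : seq nat) k x z : k < size s -> z \in s ->
  z \in set_nth 0 s k x \/ z = nth 0 s k.
Proof.
move=> ks zs; case: (eqVneq (index z s) k) => [<-|ne]; first by right; rewrite nth_index.
left; have h : nth 0 (set_nth 0 s k x) (index z s) = z.
  by rewrite nth_set_nth /= ifN // nth_index.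
rewrite -h; apply: mem_nth.
by rewrite size_set_nth leq_max index_mem zs orbT.
Qed.

Lemma set_nth_sub (s : seq nat) k x z : k < size s -> z \in set_nth 0 s k x ->
  z = x \/ z \in s.
Proof.
move=> ks; rewrite set_nthE ks mem_cat inE => /or3P[h|/eqP->|h]; auto.
  by right; apply: mem_take h.
by right; apply: mem_drop h.
Qed.

Lemma set_nth_in (s : seq nat) k x : k < size s -> x \in set_nth 0 s k x.
Proof.
move=> ks; have h : nth 0 (set_nth 0 s k x) k = x by rewrite nth_set_nth /= eqxx.
by rewrite -{1}h; apply: mem_nth; rewrite size_set_nth leq_max ks orbT.
Qed.

Lemma count_set_nth_ge (P : pred nat) (s : seq nat) k x : k < size s ->
  count P s <= (count P (set_nth 0 s k x)).+1.
Proof. move=> ks; rewrite count_set_nth_ltn //; lia. Qed.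

Notation r0 t := (nth [::] t 0).
Notation r1 t := (nth [::] t 1).
Notation bk x r := (find (fun y => x < y) r).

Lemma row0_ins t x : r0 (rs_insert t x) =
  if has (fun y => x < y) (r0 t) then set_nth 0 (r0 t) (bk x (r0 t)) x
  else rcons (r0 t) x.
Proof. by case: t => [|r t] //=; case: ifP. Qed.

Lemma row1_ins t x : r1 (rs_insert t x) =
  if has (fun y => x < y) (r0 t) then
    (let y := nth 0 (r0 t) (bk x (r0 t)) in
     if has (fun z => y < z) (r1 t) then set_nth 0 (r1 t) (bk y (r1 t)) y
     else rcons (r1 t) y)
  else r1 t.
Proof.
case: t => [|r t] //=; case: ifP => // _.
case: t => [|r' t] //=; case: ifP => //.
Qed.

Lemma size_ins t x : size t <= size (rs_insert t x).
Proof.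
elim: t x => [|r t IH] x //=; case: ifP => _ //=; exact: IH.
Qed.

Lemma size_foldl t r : size t <= size (foldl rs_insert t r).
Proof.
elim: r t => [|x r IH] t //=; exact: leq_trans (size_ins t x) (IH _).
Qed.

Lemma ins2 t x : size t <= 2 -> size (rs_insert t x) <= 2 ->
  has (fun y => x < y) (r0 t) ->
  ~~ has (fun z => nth 0 (r0 t) (bk x (r0 t)) < z) (r1 t).
Proof.
case: t => [|r [|r' [|r'' t]]] //= _; case: ifP => //= _.
by case: ifP.
Qed.

Lemma foldl_inv (Inv : tableau -> Prop) r t :
  (forall t x, size t <= 2 -> size (rs_insert t x) <= 2 -> Inv t -> Inv (rs_insert t x)) ->
  size (foldl rs_insert t r) <= 2 -> Inv t -> Inv (foldl rs_insert t r).
Proof.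
move=> step; elim: r t => [|x r IH] t //= hs hi; apply: IH => //.
apply: step => //; apply: leq_trans hs.
  exact: leq_trans (size_ins t x) (size_foldl _ r).
exact: size_foldl.
Qed.

Lemma P1 t x z : size t <= 2 -> size (rs_insert t x) <= 2 ->
  z \in r1 t -> z \in r1 (rs_insert t x).
Proof.
move=> h1 h2 hz; rewrite row1_ins; case: ifP => // hh /=.
by rewrite (negbTE (ins2 h1 h2 hh)) mem_rcons inE hz orbT.
Qed.

Lemma P2 t x : x \in r0 (rs_insert t x).
Proof.
rewrite row0_ins; case: ifP => hh; last by rewrite mem_rcons inE eqxx.
by apply: set_nth_in; rewrite -has_find.
Qed.

Lemma P3 t x z : size t <= 2 -> size (rs_insert t x) <= 2 -> z \in r0 t ->
  z \in r0 (rs_insert t x) \/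
  (z \in r1 (rs_insert t x) /\ ~~ has (fun y => z < y) (r1 t)).
Proof.
move=> h1 h2 hz; rewrite row0_ins row1_ins; case: ifP => hh; last first.
  by left; rewrite mem_rcons inE hz orbT.
have kl : bk x (r0 t) < size (r0 t) by rewrite -has_find.
case: (set_nth_mem x kl hz) => [->|ez]; first by left.
right; move: (ins2 h1 h2 hh); rewrite /= -ez => hn; rewrite (negbTE hn).
by rewrite mem_rcons inE eqxx.
Qed.

Lemma P4 t x z : size t <= 2 -> size (rs_insert t x) <= 2 -> z \in r0 t -> x < z ->
  exists y, [/\ y \in r1 (rs_insert t x), x < y &
                (sorted leq (r0 t) -> y <= z)].
Proof.
move=> h1 h2 hz xz; have hh : has (fun y => x < y) (r0 t) by apply/hasP; exists z.
exists (nth 0 (r0 t) (bk x (r0 t))); split.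
- rewrite row1_ins hh /= (negbTE (ins2 h1 h2 hh)).
  by rewrite mem_rcons inE eqxx.
- exact: (nth_find 0 hh).
- move=> srt; rewrite -(nth_index 0 hz).
  apply: (sorted_leq_nth leq_trans leqnn) => //; rewrite ?inE ?index_mem //.
    by rewrite -has_find.
  rewrite leqNgt; apply/negP => /(before_find 0); rewrite nth_index // xz.
  done.
Qed.

Lemma S0 t x : sorted leq (r0 t) -> sorted leq (r0 (rs_insert t x)).
Proof.
move=> srt; rewrite row0_ins; case: ifP => hh.
  set k := bk x (r0 t).
  have kl : k < size (r0 t) by rewrite -has_find.
  apply/(sortedP 0) => j; rewrite size_set_nth (maxn_idPr kl) => js.
  rewrite !nth_set_nth /=.
  have mono : forall a b, a <= b -> b < size (r0 t) -> nth 0 (r0 t) a <= nth 0 (r0 t) b.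
    move=> a b ab bs; apply: (sorted_leq_nth leq_trans leqnn) => //; rewrite inE //.
    exact: leq_ltn_trans ab bs.
  have xk : x < nth 0 (r0 t) k by exact: (nth_find 0 hh).
  case: ifP => /eqP ej; case: ifP => /eqP ej1.
  + lia.
  + subst j; apply: ltnW; apply: leq_trans xk _; exact: mono.
  + have : ~~ (x < nth 0 (r0 t) j).
      by apply/negbT; apply: (before_find 0); rewrite -/k; lia.
    by rewrite -leqNgt.
  + by apply: mono.
have hall : all (fun y => y <= x) (r0 t).
  by apply/allP => y yin; rewrite leqNgt; apply/negP => xy; move/hasP: hh; apply; exists y.
case: (r0 t) srt hall => [|a s] // srt /allP hall.
rewrite /= rcons_path; apply/andP; split => //; apply: hall; exact: mem_last.
Qed.

Lemma C0 t x z : z \in r0 (rs_insert t x) -> z = x \/ z \in r0 t.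
Proof.
rewrite row0_ins; case: ifP => hh.
  by apply: set_nth_sub; rewrite -has_find.
by rewrite mem_rcons inE => /orP[/eqP|]; auto.
Qed.

Lemma CB (P : pred nat) t x : count P (r0 t) <= (count P (r0 (rs_insert t x))).+1.
Proof.
rewrite row0_ins; case: ifP => hh.
  by apply: count_set_nth_ge; rewrite -has_find.
rewrite -cats1 count_cat; lia.
Qed.

Lemma CB2 (P : pred nat) t x : ~~ has (fun y => x < y) (r0 t) ->
  count P (r0 (rs_insert t x)) = count P (r0 t) + P x.
Proof. by rewrite row0_ins => /negbTE ->; rewrite -cats1 count_cat /= addn0. Qed.


Definition Sm (i m : nat) : pred nat := fun x => i <= x <= i + m.
Definition Bg (i m : nat) : pred nat := fun x => i + m < x <= i + 2 * m.
Definition Iv (i m : nat) : pred nat := fun x => i <= x <= i + 2 * m.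

Lemma RS_rcons v x : RS (rcons v x) = rs_insert (RS v) x.
Proof. by rewrite /RS -cats1 foldl_cat. Qed.

Lemma RS_cat v r : RS (v ++ r) = foldl rs_insert (RS v) r.
Proof. by rewrite /RS foldl_cat. Qed.

Lemma size_RS_cat v r : size (RS v) <= size (RS (v ++ r)).
Proof. rewrite RS_cat; exact: size_foldl. Qed.

Lemma inrows v : size (RS v) <= 2 ->
  forall a, a \in v -> a \in r0 (RS v) \/ a \in r1 (RS v).
Proof.
elim/last_ind: v => [|v x IH] //; rewrite RS_rcons => hs a.
have hs' : size (RS v) <= 2 by apply: leq_trans hs; exact: size_ins.
rewrite mem_rcons inE => /orP[/eqP->|av]; first by left; apply: P2.
case: (IH hs' a av) => h.
  case: (P3 hs' hs h) => [|[]]; auto.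
by right; apply: P1.
Qed.

Lemma sorted_r0 v : sorted leq (r0 (RS v)).
Proof.
elim/last_ind: v => [|v x IH] //; rewrite RS_rcons; exact: S0.
Qed.

Lemma r0_sub v z : z \in r0 (RS v) -> z \in v.
Proof.
elim/last_ind: v => [|v x IH] //; rewrite RS_rcons => /C0 [->|h].
  by rewrite mem_rcons mem_head.
by rewrite mem_rcons inE IH ?orbT.
Qed.

Lemma R2 i m u : uniq u -> RS u = [:: iota i m.+1; iota (i + m + 1) m] ->
  forall v b r a, u = v ++ b :: r -> a \in v -> Bg i m a -> Bg i m b -> a < b.
Proof.
move=> Hu Hfin v b r a eu av Ba Bb.
have hu2 : size (RS u) <= 2 by rewrite Hfin.
have ab : a != b.
  apply/eqP => e; move: Hu; rewrite eu cat_uniq => /and3P[_ /hasP []].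
  by exists b; rewrite ?mem_head // -e.
rewrite ltn_neqAle ab /= leqNgt; apply/negP => ba.
have eu' : u = rcons v b ++ r by rewrite eu cat_rcons.
have hs' : size (RS (rcons v b)) <= 2 by apply: leq_trans hu2; rewrite eu'; apply: size_RS_cat.
have hs : size (RS v) <= 2 by apply: leq_trans hs'; rewrite RS_rcons; apply: size_ins.
pose Inv t := b \in r0 t /\ exists2 y, y \in r1 t & b < y.
have I0 : Inv (RS (rcons v b)).
  split; first by rewrite RS_rcons; apply: P2.
  rewrite RS_rcons in hs' *.
  case: (inrows hs av) => h.
    by have [y [y1 y2 _]] := P4 hs hs' h ba; exists y.
  by exists a => //; apply: P1.
have : Inv (RS u).
  rewrite eu' RS_cat; apply: foldl_inv => //; last by rewrite -RS_cat -eu'.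
  move=> t x h1 h2 [hb [y y1 yb]]; split; last by exists y => //; apply: P1.
  case: (P3 h1 h2 hb) => [//|[_ /hasP []]]; by exists y.
move=> [hb _]; move: hb; rewrite Hfin /= inE mem_iota; move: Bb; rewrite /Bg; lia.
Qed.

Lemma R1 i m u : uniq u -> RS u = [:: iota i m.+1; iota (i + m + 1) m] ->
  forall v b r a, u = v ++ b :: r -> a \in v -> Sm i m a -> Sm i m b -> a < b.
Proof.
move=> Hu Hfin v b r a eu av Sa Sb.
have hu2 : size (RS u) <= 2 by rewrite Hfin.
have ab : a != b.
  apply/eqP => e; move: Hu; rewrite eu cat_uniq => /and3P[_ /hasP []].
  by exists b; rewrite ?mem_head // -e.
rewrite ltn_neqAle ab /= leqNgt; apply/negP => ba.
have eu' : u = rcons v b ++ r by rewrite eu cat_rcons.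
have hs' : size (RS (rcons v b)) <= 2 by apply: leq_trans hu2; rewrite eu'; apply: size_RS_cat.
have hs : size (RS v) <= 2 by apply: leq_trans hs'; rewrite RS_rcons; apply: size_ins.
have fin : forall y, y \in r1 (RS (rcons v b)) -> Sm i m y -> False.
  move=> y y1 Sy.
  have : y \in r1 (RS u).
    rewrite eu' RS_cat; apply: (foldl_inv (Inv := fun t => y \in r1 t)) => //.
      by move=> t x h1 h2; apply: P1.
    by rewrite -RS_cat -eu'.
  rewrite Hfin /= mem_iota; move: Sy; rewrite /Sm; lia.
rewrite RS_rcons in hs' fin.
case: (inrows hs av) => h.
  have [y [y1 y2 y3]] := P4 hs hs' h ba.
  apply: (fin y y1); have := y3 (sorted_r0 v); move: Sa Sb y2; rewrite /Sm; lia.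
by apply: (fin a) => //; apply: P1.
Qed.

Lemma R3 i m u : uniq u -> RS u = [:: iota i m.+1; iota (i + m + 1) m] ->
  all (Iv i m) u -> 0 < m ->
  forall n, count (Bg i m) (drop n u) <= count (Sm i m) (drop n u).
Proof.
move=> Hu Hfin HI m0.
have hu2 : size (RS u) <= 2 by rewrite Hfin.
have key : forall r v, u = v ++ r ->
  count (Bg i m) (r0 (RS v)) + count (Bg i m) r <=
  count (Bg i m) (r0 (RS u)) + count (Sm i m) r.
  elim=> [|x r IH] v eu; first by rewrite eu cats0 !addn0.
  have eu' : u = rcons v x ++ r by rewrite eu cat_rcons.
  have := IH _ eu'; rewrite RS_rcons /=.
  have xI : Iv i m x by move/allP: HI; apply; rewrite eu mem_cat mem_head orbT.
  case Bx: (Bg i m x).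
    have nh : ~~ has (fun y => x < y) (r0 (RS v)).
      apply/hasP => -[a a0 xa]; have av := r0_sub a0.
      have aI : Iv i m a by move/allP: HI; apply; rewrite eu mem_cat av.
      case Ba: (Bg i m a).
        by have := R2 Hu Hfin eu av Ba Bx; lia.
      move: Ba Bx aI xa; rewrite /Bg /Iv; lia.
    rewrite CB2 // Bx; lia.
  have Sx : Sm i m x by move: Bx xI; rewrite /Bg /Iv /Sm; lia.
  rewrite Sx; have := CB (Bg i m) (RS v) x; lia.
move=> n; have := key (drop n u) (take n u) (esym (cat_take_drop n u)).
have -> : count (Bg i m) (r0 (RS u)) = 0.
  rewrite Hfin; apply/eqP; rewrite -leqn0 leqNgt -has_count.
  apply/hasP => -[y]; rewrite /= inE mem_iota /Bg; lia.
lia.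
Qed.

Lemma count_lt_iota a n c : a <= c <= a + n ->
  count (fun z => z < c) (iota a n) = c - a.
Proof.
move=> h; have e : n = (c - a) + (a + n - c) by lia.
rewrite e iotaD count_cat.
rewrite (eq_in_count (a1 := fun z => z < c) (a2 := predT) (s := iota a (c - a))); last first.
  by move=> z; rewrite mem_iota /=; lia.
rewrite (eq_in_count (a1 := fun z => z < c) (a2 := pred0) (s := iota _ _)); last first.
  by move=> z; rewrite mem_iota /=; lia.
by rewrite count_predT count_pred0 size_iota addn0.
Qed.

Lemma index_iota_in a n x : a <= x < a + n -> index x (iota a n) = x - a.
Proof.
move=> h; have hx : x = nth 0 (iota a n) (x - a) by rewrite nth_iota; lia.
by rewrite {1}hx index_uniq ?iota_uniq // size_iota; lia.
Qed.

Lemma std_crit (w : seq nat) N (h phi : nat -> nat) :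
  uniq w -> perm_eq w (iota 1 N) -> {in w &, injective phi} ->
  (forall x, x \in w -> 0 < phi x <= N) ->
  (forall x y, x \in w -> y \in w ->
     (h y < h x) || ((h y == h x) && (index y w < index x w)) = (phi y < phi x)) ->
  std_word (map h w) = map phi w.
Proof.
move=> uw pw inj rng crit.
have sw : size w = N by rewrite (perm_size pw) size_iota.
have pphi : perm_eq (map phi w) (iota 1 N).
  have um : uniq (map phi w) by rewrite (map_inj_in_uniq inj).
  apply: uniq_perm; rewrite ?iota_uniq //.
  have [] := uniq_min_size (s1 := map phi w) (s2 := iota 1 N) um _ _ => //.
  - move=> z /mapP [x xw ->]; rewrite mem_iota; have := rng x xw; lia.
  - by rewrite size_iota size_map sw.
apply: (@eq_from_nth _ 0); first by rewrite /std_word size_map size_iota !size_map.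
rewrite /std_word size_map size_iota => q qs.
rewrite size_map in qs.
rewrite (nth_map 0) ?size_iota ?size_map // nth_iota ?size_map // add0n (nth_map 0) //.
rewrite (nth_map 0) //; set x := nth 0 w q.
have xw : x \in w by apply: mem_nth.
have qx : q = index x w by rewrite index_uniq.
rewrite count_map -map_take count_map count_take_index //.
set A := count _ w; set B := count _ w.
have -> : A + B = count (fun y => phi y < phi x) w.
  rewrite /A /B -count_predUI.
  rewrite (eq_count (a1 := predI _ _) (a2 := pred0)); last first.
    by move=> y /=; rewrite /preim /=; case: (ltngtP (h y) (h x)).
  rewrite count_pred0 addn0; apply: eq_in_count => y yw /=.
  rewrite /preim /= -(crit x y xw yw).
  by rewrite qx.
rewrite -(count_map phi (fun z => z < phi x)).
move/permP: pphi => ->; rewrite count_lt_iota; have := rng x xw; lia.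
Qed.

Inductive Hyp (w : seq nat) N i m : Prop :=
  HypI of uniq w & perm_eq w (iota 1 N) & 0 < m & 0 < i & i + 2 * m <= N &
      RS (filter (Iv i m) w) = [:: iota i m.+1; iota (i + m + 1) m].

Lemma incr_sorted (P : pred nat) s :
  (forall v b r a, s = v ++ b :: r -> a \in v -> P a -> P b -> a < b) ->
  sorted ltn (filter P s).
Proof.
elim: s => [|c s IH] //= H.
have H' : forall v b r a, s = v ++ b :: r -> a \in v -> P a -> P b -> a < b.
  by move=> v b r a e av; apply: (H (c :: v) b r a); rewrite ?e // inE av orbT.
case: ifP => Pc; last exact: IH.
rewrite sorted_pairwise; last exact: ltn_trans.
rewrite pairwise_cons -sorted_pairwise ?IH //; last exact: ltn_trans.
rewrite andbT; apply/allP => b; rewrite mem_filter => /andP[Pb bs].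
case/splitPr: bs H => v r H; apply: (H (c :: v) b r c) => //; exact: mem_head.
Qed.

Lemma filter_iota_eq (P : pred nat) (w : seq nat) a n :
  sorted ltn (filter P w) -> (forall x, (P x && (x \in w)) = (a <= x < a + n)) ->
  filter P w = iota a n.
Proof.
move=> srt H; apply: (irr_sorted_eq ltn_trans ltnn) => //; first exact: iota_ltn_sorted.
by move=> x; rewrite mem_filter mem_iota H.
Qed.

Lemma memw w N i m x : Hyp w N i m -> (x \in w) = (0 < x <= N).
Proof. by case=> _ pw _ _ _ _; rewrite (perm_mem pw) mem_iota; lia. Qed.

Lemma filter_sub (P : pred nat) i m w : (forall x, P x -> Iv i m x) ->
  filter P (filter (Iv i m) w) = filter P w.
Proof.
move=> h; rewrite -filter_predI; apply: eq_filter => x /=.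
by case Px: (P x) => //=; rewrite h.
Qed.

Lemma W1S w N i m : Hyp w N i m -> filter (Sm i m) w = iota i m.+1.
Proof.
move=> H; have [uw pw m0 i0 iN Hfin] := H.
apply: filter_iota_eq.
  rewrite -(filter_sub _ (m := m) (i := i)); last by move=> x; rewrite /Sm /Iv; lia.
  apply: incr_sorted; apply: R1 Hfin; exact: filter_uniq.
by move=> x; rewrite (memw _ H) /Sm; lia.
Qed.

Lemma W1B w N i m : Hyp w N i m -> filter (Bg i m) w = iota (i + m + 1) m.
Proof.
move=> H; have [uw pw m0 i0 iN Hfin] := H.
apply: filter_iota_eq.
  rewrite -(filter_sub _ (m := m) (i := i)); last by move=> x; rewrite /Bg /Iv; lia.
  apply: incr_sorted; apply: R2 Hfin; exact: filter_uniq.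
by move=> x; rewrite (memw _ H) /Bg; lia.
Qed.

Lemma count_sub (P : pred nat) i m s : (forall x, P x -> Iv i m x) ->
  count P (filter (Iv i m) s) = count P s.
Proof.
move=> h; rewrite count_filter; apply: eq_count => x /=.
by case Px: (P x) => //=; rewrite h.
Qed.

Lemma W2 w N i m : Hyp w N i m ->
  forall n, count (Bg i m) (drop n w) <= count (Sm i m) (drop n w).
Proof.
move=> [uw pw m0 i0 iN Hfin] n.
rewrite -(count_sub (i := i) (m := m)); last by move=> x; rewrite /Bg /Iv; lia.
rewrite -[X in _ <= X](count_sub (i := i) (m := m)); last by move=> x; rewrite /Sm /Iv; lia.
rewrite filter_drop; exact: (R3 (filter_uniq _ uw) Hfin (filter_all _ _) m0).
Qed.

Lemma idx_count (P : pred nat) (s : seq nat) a b : a < size s -> b < size s ->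
  P (nth 0 s a) -> P (nth 0 s b) -> (a < b) = (count P (take a s) < count P (take b s)).
Proof.
move=> ha hb Pa Pb; case: (ltngtP a b) => ab.
- by rewrite (count_take_lt ab ha Pa).
- by have := count_take_lt ab hb Pb; lia.
- by rewrite ab ltnn.
Qed.

Lemma order_iota (P : pred nat) (w : seq nat) a n x y : uniq w -> x \in w -> y \in w ->
  P x -> P y -> filter P w = iota a n -> (index x w < index y w) = (x < y).
Proof.
move=> uw xw yw Px Py hf.
have xi : x \in iota a n by rewrite -hf mem_filter Px xw.
have yi : y \in iota a n by rewrite -hf mem_filter Py yw.
have ix : index x (filter P w) = x - a by rewrite hf index_iota_in // -mem_iota.
have iy : index y (filter P w) = y - a by rewrite hf index_iota_in // -mem_iota.
move: xi yi; rewrite !mem_iota => xi yi.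
rewrite (@idx_count P w) ?index_mem ?nth_index //.
rewrite -!index_filter // ix iy; lia.
Qed.

Definition gc (i m x : nat) := if i <= x <= i + m then i
  else if i + m < x <= i + 2 * m then i.+1 else x.

Lemma gc_i i m x : 0 < m -> (gc i m x == i) = Sm i m x.
Proof. rewrite /gc /Sm => m0; do ?case: ifP; lia. Qed.

Lemma gc_i1 i m x : 0 < m -> (gc i m x == i.+1) = Bg i m x.
Proof. rewrite /gc /Bg => m0; do ?case: ifP; lia. Qed.

Lemma count_gc_i i m s : 0 < m -> count (pred1 i) (map (gc i m) s) = count (Sm i m) s.
Proof. move=> m0; rewrite count_map; apply: eq_count => x /=; exact: gc_i. Qed.

Lemma count_gc_i1 i m s : 0 < m -> count (pred1 i.+1) (map (gc i m) s) = count (Bg i m) s.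
Proof. move=> m0; rewrite count_map; apply: eq_count => x /=; exact: gc_i1. Qed.

Lemma eqS_false n : (n.+1 == n) = false.
Proof. by elim: n. Qed.

Lemma unbr_skip i W o pos acc :
  (forall n, n < size W -> nth 0 W n = i ->
     count (pred1 i) (take n W) < o + count (pred1 i.+1) (take n W)) ->
  exists o', o' + count (pred1 i) W = o + count (pred1 i.+1) W /\
    forall R, unbr_pos i (W ++ R) o pos acc = unbr_pos i R o' (pos + size W) acc.
Proof.
elim: W o pos => [|x W IH] o pos H.
  by exists o; split => // R; rewrite addn0.
have H0 := H 0 (ltn0Sn _); rewrite /= in H0.
case: (eqVneq x i.+1) => [ex|nx1].
  have [o' [e1 e2]] : exists o', o' + count (pred1 i) W = o.+1 + count (pred1 i.+1) W /\
    forall R, unbr_pos i (W ++ R) o.+1 pos.+1 acc = unbr_pos i R o' (pos.+1 + size W) acc.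
    apply: IH => n nW hn; have := H n.+1 nW hn; rewrite /= ex; lia.
  exists o'; split; first by rewrite /= ex eqS_false eqxx /= add0n e1 add1n addSnnS.
  by move=> R; rewrite /= ex eqxx e2 addSnnS.
case: (eqVneq x i) => [ex|nx].
  have o0 : 0 < o by have := H0 ex; lia.
  have [o' [e1 e2]] : exists o', o' + count (pred1 i) W = o.-1 + count (pred1 i.+1) W /\
    forall R, unbr_pos i (W ++ R) o.-1 pos.+1 acc = unbr_pos i R o' (pos.+1 + size W) acc.
    apply: IH => n nW hn; have := H n.+1 nW hn; rewrite /= ex eqxx; lia.
  exists o'; split.
    by rewrite /= ex eqxx /= eq_sym eqS_false /= add1n add0n addnS e1 -addSn prednK.
  by move=> R; rewrite /= (negbTE nx1) ex eqxx o0 e2 addSnnS.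
have [o' [e1 e2]] : exists o', o' + count (pred1 i) W = o + count (pred1 i.+1) W /\
  forall R, unbr_pos i (W ++ R) o pos.+1 acc = unbr_pos i R o' (pos.+1 + size W) acc.
  apply: IH => n nW hn; have := H n.+1 nW hn; rewrite /= (negbTE nx) (negbTE nx1) /= !add0n; lia.
exists o'; split; first by rewrite /= (negbTE nx) (negbTE nx1) /= !add0n.
by move=> R; rewrite /= (negbTE nx) (negbTE nx1) e2 addSnnS.
Qed.

Lemma size_w w N i m : Hyp w N i m -> size w = N.
Proof. by case=> _ pw *; rewrite (perm_size pw) size_iota. Qed.

Lemma countS_w w N i m : Hyp w N i m -> count (Sm i m) w = m.+1.
Proof. by move=> H; rewrite -size_filter (W1S H) size_iota. Qed.

Lemma countB_w w N i m : Hyp w N i m -> count (Bg i m) w = m.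
Proof. by move=> H; rewrite -size_filter (W1B H) size_iota. Qed.

Lemma find_p w N i m : Hyp w N i m -> exists p k,
  [/\ p < N, nth 0 w p = i + k, k <= m,
      count (Sm i m) (take p w) = k /\ count (Bg i m) (take p w) = k &
      forall n, n <= p -> count (Sm i m) (take n w) <= count (Bg i m) (take n w)].
Proof.
move=> H; have [uw pw m0 i0 iN Hfin] := H.
have sw := size_w H.
pose P n := count (Bg i m) (take n w) < count (Sm i m) (take n w).
have ex : exists n, P n.
  by exists N; rewrite /P take_oversize ?sw // (countS_w H) (countB_w H).
have PN : P N by rewrite /P take_oversize ?sw // (countS_w H) (countB_w H).
case: (ex_minnP ex) => n0 Pn0 hmin.
have n0N : n0 <= N by apply: hmin.
have n0pos : 0 < n0 by move: Pn0; case: (n0) => //; rewrite /P take0.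
set p := n0.-1.
have pn0 : p.+1 = n0 by rewrite /p prednK.
have pN : p < size w by rewrite sw; lia.
have hp : forall n, n <= p -> count (Sm i m) (take n w) <= count (Bg i m) (take n w).
  move=> n np; rewrite leqNgt; apply/negP => Pn; have := hmin n Pn; lia.
set x := nth 0 w p.
have xw : x \in w by apply: mem_nth.
move: Pn0; rewrite /P -pn0 (take_nth 0 pN) -!cats1 !count_cat /= -/x !addn0.
have := hp p (leqnn p).
set cS := count (Sm i m) (take p w); set cB := count (Bg i m) (take p w).
case Sx: (Sm i m x); case Bx: (Bg i m x) => /= h1 h2; try lia.
have ecB : cB = cS by lia.
have ix : index x (filter (Sm i m) w) = cS.
  by rewrite index_filter // index_uniq // -sw.
have xi : x \in iota i m.+1 by rewrite -(W1S H) mem_filter Sx xw.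
move: ix; rewrite (W1S H) index_iota_in; last by rewrite -mem_iota.
move: xi; rewrite mem_iota => xi ix.
exists p, cS; split => //; first by lia.
  by lia.
by lia.
Qed.

Lemma SmBg i m x : Sm i m x -> Bg i m x = false.
Proof. rewrite /Sm /Bg; lia. Qed.

Lemma unbr_main w N i m p k : Hyp w N i m -> p < N -> nth 0 w p = i + k -> k <= m ->
  count (Sm i m) (take p w) = k -> count (Bg i m) (take p w) = k ->
  (forall n, n <= p -> count (Sm i m) (take n w) <= count (Bg i m) (take n w)) ->
  unbr_pos i (map (gc i m) w) 0 0 None = Some p.
Proof.
move=> H pN wp km cSp cBp hp; have [uw pw m0 i0 iN Hfin] := H.
have sw := size_w H.
have pw' : p < size w by rewrite sw.
have Sp : Sm i m (nth 0 w p) by rewrite wp /Sm; lia.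
have gp : gc i m (nth 0 w p) = i by apply/eqP; rewrite gc_i.
have ew : w = take p w ++ nth 0 w p :: drop p.+1 w by rewrite -drop_nth ?cat_take_drop.
rewrite ew map_cat /= gp.
have sX : size (map (gc i m) (take p w)) = p by rewrite size_map size_takel // ltnW.
have hX : forall n, n < size (map (gc i m) (take p w)) -> nth 0 (map (gc i m) (take p w)) n = i ->
   count (pred1 i) (take n (map (gc i m) (take p w))) < 0 + count (pred1 i.+1) (take n (map (gc i m) (take p w))).
  move=> n; rewrite sX => np; rewrite (nth_map 0) ?size_takel ?(ltnW pw') // nth_take //.
  move/eqP; rewrite gc_i // => Sn.
  rewrite -map_take take_takel ?(ltnW np) // count_gc_i // count_gc_i1 //.
  have := hp n.+1 np; rewrite (take_nth 0) ?(ltn_trans np pw') // -!cats1 !count_cat /= Sn.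
  have -> : Bg i m (nth 0 w n) = false by move: Sn; rewrite /Sm /Bg; lia.
  lia.
have [o' [e1 e2]] := unbr_skip 0 None hX.
rewrite e2; move: e1; rewrite count_gc_i // count_gc_i1 // cSp cBp => e1.
have -> : o' = 0 by lia.
rewrite /= eq_sym eqS_false eqxx /= add0n sX.
rewrite -[X in unbr_pos _ X]cats0.
have hY : forall n, n < size (map (gc i m) (drop p.+1 w)) -> nth 0 (map (gc i m) (drop p.+1 w)) n = i ->
   count (pred1 i) (take n (map (gc i m) (drop p.+1 w))) < 0 + count (pred1 i.+1) (take n (map (gc i m) (drop p.+1 w))).
  move=> n; rewrite size_map => ns; rewrite (nth_map 0) // nth_drop.
  move/eqP; rewrite gc_i // => Sq.
  rewrite -map_take count_gc_i // count_gc_i1 //.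
  set q := p.+1 + n.
  have qw : q < size w by move: ns; rewrite size_drop /q; lia.
  have := W2 H q.+1.
  have := count_take_drop (Sm i m) q w; have := count_take_drop (Bg i m) q w.
  rewrite (countS_w H) (countB_w H) (drop_nth 0 qw) /= Sq.
  rewrite (SmBg Sq).
  rewrite /q takeD !count_cat (take_nth 0 pw') -!cats1 !count_cat /= Sp cSp cBp.
  rewrite (SmBg Sp).
  lia.
have [o'' [_ e3]] := unbr_skip p.+1 (Some p) hY.
by rewrite e3.
Qed.

Definition cyc (a b x : nat) := if x == a then b else if a < x <= b then x.-1 else x.
Definition gk (i m k x : nat) := if x == i + k then i.+1 else gc i m x.

Lemma arithA i m k x y : 0 < m -> k <= m -> gk i m k y != gk i m k x ->
  (gk i m k y < gk i m k x) = (cyc (i + k) (i + m + k) y < cyc (i + k) (i + m + k) x).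
Proof. move=> m0 km; rewrite /gk /gc /cyc; do ?case: ifP; lia. Qed.

Lemma arithS i m k x y : 0 < m -> k <= m -> Sm i m x -> Sm i m y -> x != i + k -> y != i + k ->
  (y < x) = (cyc (i + k) (i + m + k) y < cyc (i + k) (i + m + k) x).
Proof. rewrite /Sm /cyc => m0 km; do ?case: ifP; lia. Qed.

Lemma arithB i m k x y : 0 < m -> k <= m -> Bg i m x -> Bg i m y ->
  (y < x) = (cyc (i + k) (i + m + k) y < cyc (i + k) (i + m + k) x).
Proof. rewrite /Bg /cyc => m0 km; do ?case: ifP; lia. Qed.

Lemma arithBk1 i m k y : 0 < m -> k <= m -> Bg i m y ->
  (y <= i + m + k) = (cyc (i + k) (i + m + k) y < cyc (i + k) (i + m + k) (i + k)).
Proof. rewrite /Bg /cyc => m0 km; do ?case: ifP; lia. Qed.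

Lemma arithBk2 i m k x : 0 < m -> k <= m -> Bg i m x ->
  (i + m + k < x) = (cyc (i + k) (i + m + k) (i + k) < cyc (i + k) (i + m + k) x).
Proof. rewrite /Bg /cyc => m0 km; do ?case: ifP; lia. Qed.

Lemma gk_cases i m k x : 0 < m -> k <= m ->
  (gk i m k x = i /\ Sm i m x /\ x != i + k) \/
  (gk i m k x = i.+1 /\ (Bg i m x \/ x = i + k)) \/
  (gk i m k x = x /\ ~~ Sm i m x /\ ~~ Bg i m x).
Proof.
move=> m0 km; rewrite /gk /gc /Sm /Bg.
case: (eqVneq x (i + k)) => [->|nx]; first by right; left; split => //; right.
do ?case: ifP => ?; first by left; repeat split => //.
- by right; left; split => //; left.
- by right; right; split => //; lia.
Qed.

Lemma set_nth_map (f : nat -> nat) (w : seq nat) p y : uniq w -> p < size w ->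
  set_nth 0 (map f w) p y = map (fun x => if x == nth 0 w p then y else f x) w.
Proof.
move=> uw pw; apply: (@eq_from_nth _ 0).
  by rewrite size_set_nth !size_map; apply/maxn_idPr.
rewrite size_set_nth size_map (maxn_idPr pw) => q qw.
rewrite nth_set_nth /= !(nth_map 0) // nth_uniq //.
Qed.

Lemma E2_lemma w N i m p k : Hyp w N i m -> nth 0 w p = i + k -> p < N -> k <= m ->
  count (Bg i m) (take p w) = k ->
  forall x, Bg i m x -> x \in w -> (index x w < p) = (x <= i + m + k).
Proof.
move=> H wp pN km cBp x Bx xw; have [uw pw m0 i0 iN Hfin] := H.
have sw := size_w H.
have xi : x \in iota (i + m + 1) m by rewrite -(W1B H) mem_filter Bx xw.
have ix : index x (filter (Bg i m) w) = x - (i + m + 1) by rewrite (W1B H) index_iota_in // -mem_iota.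
rewrite index_filter // in ix.
move: xi; rewrite mem_iota => xi.
have ixs : index x w < size w by rewrite index_mem.
have Bn : Bg i m (nth 0 w (index x w)) by rewrite nth_index.
case: (ltngtP (index x w) p) => h.
- have := count_take_lt h ixs Bn; rewrite ix cBp; lia.
- have := count_take_le (Bg i m) w h.
  rewrite (take_nth 0) ?sw // -cats1 count_cat /= wp.
  have -> : Bg i m (i + k) = false by rewrite /Bg; lia.
  rewrite /= ix cBp addn0; lia.
- by move: Bn; rewrite h wp /Bg; lia.
Qed.

Lemma crit_w w N i m p k : Hyp w N i m -> nth 0 w p = i + k -> p < N -> k <= m ->
  (forall x, Bg i m x -> x \in w -> (index x w < p) = (x <= i + m + k)) ->
  forall x y, x \in w -> y \in w ->
  (gk i m k y < gk i m k x) || ((gk i m k y == gk i m k x) && (index y w < index x w)) =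
  (cyc (i + k) (i + m + k) y < cyc (i + k) (i + m + k) x).
Proof.
move=> H wp pN km E2 x y xw yw; have [uw pw m0 i0 iN Hfin] := H.
have sw := size_w H.
have ip : index (i + k) w = p by rewrite -wp index_uniq // sw.
have ipx : forall z, z \in w -> index z w = p -> z = i + k.
  by move=> z zw h; rewrite -wp -h nth_index.
case: eqP => [e|ne]; last first.
  by rewrite /= orbF; apply: arithA => //; apply/eqP.
rewrite e ltnn /=.
case: (gk_cases i x m0 km) => [[gx [Sx nx]]|[[gx [Bx|ex]]|[gx [nSx nBx]]]];
case: (gk_cases i y m0 km) => [[gy [Sy ny]]|[[gy [By|ey]]|[gy [nSy nBy]]]];
  rewrite ?gx ?gy in e; try lia.
all: first
 [ by rewrite (order_iota uw yw xw Sy Sx (W1S H)); apply: arithS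
 | by rewrite (order_iota uw yw xw By Bx (W1B H)); apply: arithB
 | by rewrite ex ey !ltnn
 | by rewrite ex ip (E2 y By yw) arithBk1
 | (rewrite ey ip -arithBk2 //;
    have := E2 x Bx xw;
    have : index x w != p by apply/eqP => /(ipx x xw) h; move: Bx; rewrite h /Bg; lia);
   lia
 | by move: nSx nSy e; rewrite /Sm /Bg; lia
 | by move: nSx e; rewrite /Sm /Bg; lia
 | by move: nSy e; rewrite /Sm /Bg; lia
 | by move: nSx e Bx; rewrite /Sm /Bg; lia
 | by move: nSy e By; rewrite /Sm /Bg; lia
 | by subst y; rewrite (ltnn (index _ _)) (ltnn (cyc _ _ _))
 ].
Qed.


Lemma struct w N i m : Hyp w N i m -> exists p k,
  [/\ k <= m, nth 0 w p = i + k, p < N,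
      f_word i (map (gc i m) w) = Some (set_nth 0 (map (gc i m) w) p i.+1) &
      std_word (set_nth 0 (map (gc i m) w) p i.+1) = map (cyc (i + k) (i + m + k)) w] /\
  (forall x, Bg i m x -> x \in w -> (index x w < p) = (x <= i + m + k)) /\
  (forall n, n <= p -> count (Sm i m) (take n w) <= count (Bg i m) (take n w)).
Proof.
move=> H; have [uw pw m0 i0 iN Hfin] := H.
have sw := size_w H.
have [p [k [pN wp km [cSp cBp] hp]]] := find_p H.
have E2 := E2_lemma H wp pN km cBp.
exists p, k; split => //; split => //.
- by rewrite /f_word (unbr_main H pN wp km cSp cBp hp).
- rewrite set_nth_map ?sw // wp.
  change (std_word (map (gk i m k) w) = map (cyc (i + k) (i + m + k)) w).
  apply: (std_crit (N := N)) => //.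
  + by move=> x y _ _; rewrite /cyc; do ?case: ifP; lia.
  + by move=> x; rewrite (memw _ H) /cyc; do ?case: ifP; lia.
  + exact: crit_w H wp pN km E2.
Qed.

Lemma row_word_tab sh v : size v = sumn sh -> row_word (tab_of_word sh v) = v.
Proof. by move=> h; rewrite /row_word /tab_of_word revK reshapeKr // sumn_rev h. Qed.

Lemma size_row_word (T : tableau) : size (row_word T) = sumn (map size T).
Proof. by rewrite /row_word size_flatten /shape map_rev sumn_rev. Qed.

Lemma size_std_word v : size (std_word v) = size v.
Proof. by rewrite /std_word size_map size_iota. Qed.

Lemma row_word_collapse i m T : row_word (collapse i m T) = map (gc i m) (row_word T).
Proof. by rewrite /row_word /collapse map_flatten map_rev. Qed.

Lemma size_collapse i m T : map size (collapse i m T) = map size T.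
Proof. by rewrite /collapse -map_comp; apply: eq_map => r /=; rewrite size_map. Qed.

(* The CS edge acts on the reading word by a cycle of values *)
Lemma CS_word la T i m T' : CS_edge la T i m T' ->
  let w := row_word T in let N := sumn la in
  Hyp w N i m /\ exists p k,
  [/\ k <= m, nth 0 w p = i + k, p < N, row_word T' = map (cyc (i + k) (i + m + k)) w &
   (forall x, Bg i m x -> x \in w -> (index x w < p) = (x <= i + m + k)) /\
   (forall n, n <= p -> count (Sm i m) (take n w) <= count (Bg i m) (take n w))].
Proof.
case=> /and4P[/eqP shT _ _ pT] _ /and4P[m0 i0 iN /eqP Hfin] [b' [fb eT']] w N.
have H : Hyp w N i m.
  by constructor => //; rewrite (perm_uniq pT) iota_uniq.
split => //.
have [p [k [[km wp pN fw sw'] [E2 E3]]]] := struct H.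
exists p, k; split => //.
move: fb; rewrite /f_tab row_word_collapse -/w fw => -[eb].
have szw : size w = sumn la by rewrite (size_w H).
have sz1 : size (set_nth 0 (map (gc i m) w) p i.+1) = sumn (map size T).
  by rewrite size_set_nth size_map (maxn_idPr _) ?szw ?shT //.
rewrite eT' -eb /std row_word_tab; last first.
  by rewrite size_std_word size_row_word.
by rewrite row_word_tab ?size_collapse // -sw'.
Qed.

Lemma D_word_swap j v v' : 0 < j -> D_word j v = Some v' ->
  exists a, v' = swap_letters a a.+1 v.
Proof.
move=> j0; rewrite /D_word; case: ifP => _.
  by case=> <-; exists j.-1; rewrite prednK.
by case: ifP => // _ [<-]; exists j.
Qed.

Lemma swapE a x : (if x == a then a.+1 else if x == a.+1 then a else x) =
  (if x == a then a.+1 else if x == a.+1 then a else x).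
Proof. by []. Qed.

Lemma no_swap1 i m k a : 2 <= m ->
  ~ (forall z, z \in [:: i + k; (i + k).+1; (i + k).+2] ->
       cyc (i + k) (i + m + k) z =
       (if z == a then a.+1 else if z == a.+1 then a else z)).
Proof.
move=> m2 H.
have h1 := H _ (mem_head _ _).
have h2 := H (i + k).+1; rewrite !inE eqxx orbT in h2; have {}h2 := h2 isT.
have h3 := H (i + k).+2; rewrite !inE eqxx !orbT in h3; have {}h3 := h3 isT.
move: h1 h2 h3; rewrite /cyc; do ?case: ifP; lia.
Qed.

Lemma no_swap2 i m k a : 2 <= m ->
  ~ (forall z, z \in [:: i + k; (i + k).+1; (i + k).+2] ->
       (let y := cyc (i + k) (i + m + k) z in
        if y == a then a.+1 else if y == a.+1 then a else y) = z).
Proof.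
move=> m2 H.
have h1 := H _ (mem_head _ _).
have h2 := H (i + k).+1; rewrite !inE eqxx orbT in h2; have {}h2 := h2 isT.
have h3 := H (i + k).+2; rewrite !inE eqxx !orbT in h3; have {}h3 := h3 isT.
move: h1 h2 h3; rewrite /= /cyc; do ?case: ifP; lia.
Qed.

Theorem proposition4p2 (la : seq nat) (T T' : tableau) (i m : nat) :
  is_partition la ->
  CS_edge la T i m T' ->
  (DE_adjacent la T T' <-> size (iota i (2 * m).+1) = 3).
Proof.
move=> _ hcs.
have [syT syT' _ _] := hcs.
have [H [p [k [km wp pN ew' [E2 E3]]]]] := CS_word hcs.
set w := row_word T in H wp E2 E3 ew'.
have [uw pw m0 i0 iN Hfin] := H.
have sw := size_w H.
have memw3 : forall z, z \in [:: i + k; (i + k).+1; (i + k).+2] -> 2 <= m -> z \in w.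
  move=> z zin m2; rewrite (memw _ H); move: zin; rewrite !inE; lia.
rewrite size_iota; split.
- move=> hDE; apply/eqP; rewrite eqSS; apply/negPn/negP => m1.
  have m2 : 2 <= m by lia.
  case: hDE => -[_ _ [j [j1 jN hD]]].
  + have [a ea] := D_word_swap (ltnW j1) hD.
    apply: (no_swap1 (k := k) (a := a) m2) => z zin.
    have zw := memw3 z zin m2.
    move: ea; rewrite ew' /swap_letters => /eq_in_map ea.
    exact: ea.
  + have [a ea] := D_word_swap (ltnW j1) hD.
    apply: (no_swap2 (k := k) (a := a) m2) => z zin.
    have zw := memw3 z zin m2.
    move: ea; rewrite ew' /swap_letters -map_comp => ea.
    have : map id w = map (fun x => (fun y => if y == a then a.+1 else if y == a.+1 then a else y)
      (cyc (i + k) (i + m + k) x)) w by rewrite map_id.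
    move/eq_in_map => ea'; by rewrite -(ea' z zw).
- move=> h3; have m1 : m = 1 by lia.
  subst m.
  left; split => //; exists i.+1; split => //; first by lia.
  rewrite ew'.
  have iw : i \in w by rewrite (memw _ H); lia.
  have i1w : i.+1 \in w by rewrite (memw _ H); lia.
  have i2w : i.+2 \in w by rewrite (memw _ H); lia.
  have Si : Sm i 1 i by rewrite /Sm; lia.
  have Si1 : Sm i 1 i.+1 by rewrite /Sm; lia.
  have Bi2 : Bg i 1 i.+2 by rewrite /Bg; lia.
  have ab : index i w < index i.+1 w by rewrite (order_iota uw iw i1w Si Si1 (W1S H)).
  have ip : index (i + k) w = p by rewrite -wp index_uniq // sw.
  have dist : forall x y, x \in w -> y \in w -> index x w = index y w -> x = y.
    by move=> x y xw yw e; rewrite -(nth_index 0 xw) -(nth_index 0 yw) e.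
  have E2c := E2 _ Bi2 i2w.
  have ca : index i.+2 w != index i w by apply/eqP => /(dist _ _ i2w iw); lia.
  have cb : index i.+2 w != index i.+1 w by apply/eqP => /(dist _ _ i2w i1w); lia.
  rewrite /D_word /=.
  have W2' := W2 H.
  clear ew' memw3 syT syT' hcs Hfin pw H iN.
  case: k km wp ip E2 E3 E2c => [|[|//]] _ wp ip E2 E3 E2c.
  + rewrite addn0 in ip; rewrite -ip addn0 /= in E2c.
    have cb' : index i.+2 w < index i.+1 w.
      rewrite ltnNge leq_eqVlt eq_sym (negbTE cb) /=; apply/negP => bc.
      have := W2' (index i.+1 w).+1.
      have h1 : 0 < count (Bg i 1) (drop (index i.+1 w).+1 w).
        rewrite -has_count; apply/hasP; exists i.+2 => //.
        by rewrite mem_drop_index.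
      have h2 : count (Sm i 1) (drop (index i.+1 w).+1 w) = 0.
        apply/eqP; rewrite -leqn0 leqNgt -has_count; apply/hasP => -[z zd Sz].
        have zw : z \in w by apply: mem_drop zd.
        move: zd; rewrite mem_drop_index //.
        have : z = i \/ z = i.+1 by move: Sz; rewrite /Sm; lia.
        by case=> ->; lia.
      lia.
    have -> : (index i.+1 w < index i.+2 w < index i w) ||
              (index i w < index i.+2 w < index i.+1 w) by lia.
    congr Some; apply: eq_map => x; rewrite /cyc !addn0; do ?case: ifP; lia.
  + rewrite addn1 in ip; rewrite -ip /= in E2c.
    have ca' : index i.+2 w < index i w.
      have := E3 (index i w).+1; rewrite -ip => /(_ ab).
      have h1 : 0 < count (Sm i 1) (take (index i w).+1 w).
        by rewrite -has_count; apply/hasP; exists i => //; rewrite mem_take_index.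
      move=> h; have : has (Bg i 1) (take (index i w).+1 w) by rewrite has_count; lia.
      case/hasP => z zt Bz.
      have zw : z \in w by apply: mem_take zt.
      have ez : z = i.+2 by move: Bz; rewrite /Bg; lia.
      move: zt; rewrite ez mem_take_index // => hc.
      lia.
    have -> : (index i.+1 w < index i.+2 w < index i w) ||
              (index i w < index i.+2 w < index i.+1 w) = false by lia.
    have -> : (index i.+1 w < index i w < index i.+2 w) ||
              (index i.+2 w < index i w < index i.+1 w) by lia.
    congr Some; apply: eq_map => x; rewrite /cyc; do ?case: ifP; lia.
Qed.
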